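(* Let $\mathfrak{X}=(X,\{R_i\}_{i=0}^{4})$ be a commutative association scheme with $R_3^\top=R_4$ and $R_i^\top=R_i$ for $0\le i\le 2$, with primitive idempotents $E_0,E_1,E_2,E_3,E_4$. Let its symmetrization $\tilde{\mathfrak X}=(X,\{R_0,R_1,R_2,R_3\cup R_4\})$ be amorphic, with primitive idempotents $\tilde E_0,\dots,\tilde E_3$ numbered so that, writing $\tilde A_i$ for the adjacency matrix of the $i$-th relation of $\tilde{\mathfrak X}$ and $k_i$ for its valency, $\tilde A_i\tilde E_0=k_i\tilde E_0$, $\tilde A_i\tilde E_i=b_i\tilde E_i$, $\tilde A_i\tilde E_j=a_i\tilde E_j$ for $1\le j\le 3$, $j\ne i$, with $a_i\ne b_i$. If $\tilde{E}_3\notin\{E_1,E_2,E_3,E_4\}$, then the digraph $(X,R_i\cup R_3)$ has $5$ distinct eigenvalues for each $i\in\{1,2\}$.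
   Context: Association scheme: finite set $X$ with a partition of $X\times X$ into relations $R_0$ (diagonal), $R_1,\dots$, closed under transposition, with constant intersection numbers; commutative if these are symmetric in the lower indices. Adjacency matrices are the $01$-matrices of the relations; primitive idempotents $E_0=J/|X|,\dots$ of the Bose–Mesner algebra satisfy $A_iE_j\in\mathbb C E_j$. A symmetric scheme is amorphic if merging the nondiagonal relations along any partition of their index set into nonempty parts gives an association scheme. Eigenvalues of a digraph $(X,R)$ are those of its $01$ adjacency matrix. *)

(* Defs.v *)
From mathcomp Require Import all_boot all_order all_algebra all_field.
Set Implicit Arguments. Unset Strict Implicit. Unset Printing Implicit Defensive.
Import GRing.Theory Num.Theory.
Local Open Scope ring_scope.

(* A configuration on the point set X = 'I_n is given by a "class function"
   c : X -> X -> I; the relations are the nonempty fibres of c. *)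

Definition isect_num (n : nat) (I : finType) (c : 'I_n -> 'I_n -> I)
  (i j : I) (x y : 'I_n) : nat :=
  #|[set z | (c x z == i) && (c z y == j)]|.

Definition is_assoc_scheme (n : nat) (I : finType) (c : 'I_n -> 'I_n -> I) : Prop :=
  [/\ exists i0, forall x y, (c x y == i0) = (x == y),
      forall i, exists j, forall x y, c x y = i -> c y x = j
    & forall i j k, exists p : nat, forall x y, c x y = k -> isect_num c i j x y = p].

Definition is_commutative (n : nat) (I : finType) (c : 'I_n -> 'I_n -> I) : Prop :=
  forall i j x y, isect_num c i j x y = isect_num c j i x y.

Definition is_symmetric (n : nat) (I : finType) (c : 'I_n -> 'I_n -> I) : Prop :=
  forall x y, c x y = c y x.

(* amorphic symmetric scheme with diagonal relation indexed by 0: every merging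
   of the nondiagonal relations (given by a relabelling g fixing 0 and sending
   nonzero labels to nonzero labels, i.e. any partition of {1..d} into nonempty
   parts) is again an association scheme *)
Definition amorphic (n d : nat) (c : 'I_n -> 'I_n -> 'I_d.+1) : Prop :=
  [/\ is_assoc_scheme c, is_symmetric c,
      (forall x y, (c x y == ord0) = (x == y))
    & forall g : 'I_d.+1 -> 'I_d.+1, g ord0 = ord0 ->
        (forall i, i != ord0 -> g i != ord0) ->
        is_assoc_scheme (fun x y => g (c x y))].

Definition adjmx (n : nat) (P : 'I_n -> 'I_n -> bool) : 'M[algC]_n :=
  \matrix_(x, y) (P x y)%:R.

Definition rel_mx (n : nat) (I : finType) (c : 'I_n -> 'I_n -> I) (i : I) : 'M[algC]_n :=
  adjmx (fun x y => c x y == i).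

Definition in_BM (n : nat) (I : finType) (c : 'I_n -> 'I_n -> I) (M : 'M[algC]_n) : Prop :=
  exists w : I -> algC, M = \sum_i w i *: rel_mx c i.

Definition prim_idem (n : nat) (I : finType) (c : 'I_n -> 'I_n -> I) (E : 'M[algC]_n) : Prop :=
  [/\ in_BM c E, E *m E = E, E != 0
    & forall F, in_BM c F -> F *m F = F -> F *m E = F -> F = 0 \/ F = E].

Definition symz (n : nat) (c : 'I_n -> 'I_n -> 'I_5) : 'I_n -> 'I_n -> 'I_4 :=
  fun x y => if (nat_of_ord (c x y) == 4)%N then inord 3 else inord (c x y).

(* Main.v *)
Require Import Defs.
From mathcomp Require Import all_boot all_order all_algebra all_field.
From mathcomp Require Import ring zify.
Set Implicit Arguments. Unset Strict Implicit. Unset Printing Implicit Defensive.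
Import Order.TTheory GRing.Theory Num.Theory.
Local Open Scope ring_scope.

Section Gen.
Variable n' : nat.
Local Notation n := n'.+1.
Local Notation MX := 'M[algC]_n.

Definition ct (A : MX) : MX := (map_mx (@Num.conj algC) A)^T.

Lemma ctM (A B : MX) : ct (A *m B) = ct B *m ct A.
Proof. by rewrite /ct map_mxM trmx_mul. Qed.
Lemma ctK (A : MX) : ct (ct A) = A.
Proof. by apply/matrixP=> i j; rewrite !mxE conjCK. Qed.
Lemma ctD (A B : MX) : ct (A + B) = ct A + ct B.
Proof. by apply/matrixP=> i j; rewrite !mxE rmorphD. Qed.
Lemma ctZ a (A : MX) : ct (a *: A) = a^* *: ct A.
Proof. by apply/matrixP=> i j; rewrite !mxE rmorphM. Qed.
Lemma ct1 : ct 1%:M = 1%:M.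
Proof. by rewrite /ct map_mx1 trmx1. Qed.
Lemma ct_sum (J : finType) (P : pred J) (F : J -> MX) :
  ct (\sum_(j | P j) F j) = \sum_(j | P j) ct (F j).
Proof.
apply/matrixP=> x y; rewrite !mxE !summxE rmorph_sum; apply: eq_bigr => j _.
by rewrite !mxE.
Qed.

Lemma ct_mul_diag (A : MX) i : (A *m ct A) i i = \sum_j `|A i j| ^+ 2.
Proof. by rewrite mxE; apply: eq_bigr => j _; rewrite !mxE normCK. Qed.

Lemma ct_mul_eq0 (A : MX) : A *m ct A = 0 -> A = 0.
Proof.
move=> H; apply/matrixP=> i j; rewrite mxE.
have S : \sum_j `|A i j| ^+ 2 = 0 by rewrite -ct_mul_diag H mxE.
have := psumr_eq0P (fun j _ => exprn_ge0 2 (normr_ge0 (A i j))) S (i:=j) isT.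
by move/eqP; rewrite sqrf_eq0 normr_eq0 => /eqP.
Qed.

Lemma tr_ct_gt0 (A : MX) : A != 0 -> 0 < \tr (A *m ct A).
Proof.
move=> nz; rewrite /mxtrace.
have ge0 : forall i, 0 <= (A *m ct A) i i.
  move=> i; rewrite ct_mul_diag; apply: sumr_ge0 => j _.
  by rewrite exprn_ge0 ?normr_ge0.
rewrite lt_def (sumr_ge0 _ (fun i _ => ge0 i)) andbT.
apply/eqP=> S; case/negP: nz; apply/eqP/ct_mul_eq0.
apply/matrixP=> x y; rewrite [RHS]mxE.
have Ax : forall z, A x z = 0.
  move=> z; have := psumr_eq0P (fun i _ => ge0 i) S (i:=x) isT.
  rewrite ct_mul_diag => S2.
  have := psumr_eq0P (fun j _ => exprn_ge0 2 (normr_ge0 (A x j))) S2 (i:=z) isT.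
  by move/eqP; rewrite sqrf_eq0 normr_eq0 => /eqP.
by rewrite mxE big1 // => z _; rewrite Ax mul0r.
Qed.

Lemma ctX (A : MX) k : ct (A ^+ k) = (ct A) ^+ k.
Proof.
elim: k => [|k IH]; first by rewrite !expr0 ct1.
rewrite exprS; change (ct (A *m A ^+ k) = ct A ^+ k.+1).
by rewrite ctM IH exprSr.
Qed.

Lemma herm_nil (H : MX) k : ct H = H -> H ^+ k.+1 = 0 -> H = 0.
Proof.
move=> hH; elim: k => [|k IH]; first by rewrite expr1.
move=> hk; apply: IH; apply: ct_mul_eq0.
rewrite ctX hH mulmxE -exprD.
have -> : (k.+1 + k.+1 = k.+2 + k)%N by rewrite addSn addnS.
by rewrite exprD hk mul0r.
Qed.

End Gen.
Section BM.
Variable n' : nat.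
Local Notation n := n'.+1.
Local Notation MX := 'M[algC]_n.
Variables (I : finType) (c : 'I_n -> 'I_n -> I).
Local Notation BM := (in_BM c).

Lemma BM0 : BM 0.
Proof. by exists (fun _ => 0); rewrite big1 // => i _; rewrite scale0r. Qed.

Lemma BMD M N : BM M -> BM N -> BM (M + N).
Proof.
move=> [w ->] [v ->]; exists (fun i => w i + v i).
by rewrite -big_split; apply: eq_bigr => i _; rewrite scalerDl.
Qed.

Lemma BMZ a M : BM M -> BM (a *: M).
Proof.
move=> [w ->]; exists (fun i => a * w i).
by rewrite scaler_sumr; apply: eq_bigr => i _; rewrite scalerA.
Qed.

Lemma BMB M N : BM M -> BM N -> BM (M - N).
Proof. by move=> hM hN; apply: BMD => //; rewrite -scaleN1r; apply: BMZ. Qed.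

Lemma BMsum (J : finType) (P : pred J) (F : J -> MX) :
  (forall j, P j -> BM (F j)) -> BM (\sum_(j | P j) F j).
Proof. by move=> H; apply: big_ind => //; [exact: BM0 | exact: BMD]. Qed.

Lemma BMsumT (J : finType) (F : J -> MX) :
  (forall j, BM (F j)) -> BM (\sum_j F j).
Proof. by move=> H; apply: big_ind => //; [exact: BM0 | exact: BMD]. Qed.

Lemma BMrel r : BM (rel_mx c r).
Proof.
exists (fun i => (i == r)%:R); rewrite (bigD1 r) //= eqxx scale1r big1 ?addr0 //.
by move=> i /negbTE ->; rewrite scale0r.
Qed.

Lemma rel_mxE r x y : rel_mx c r x y = (c x y == r)%:R.
Proof. by rewrite /rel_mx /adjmx mxE. Qed.

Lemma relM_entry i j x y :
  (rel_mx c i *m rel_mx c j) x y = (isect_num c i j x y)%:R.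
Proof.
rewrite mxE /isect_num.
have -> : \sum_z rel_mx c i x z * rel_mx c j z y =
          \sum_z (((c x z == i) && (c z y == j)) : nat)%:R.
  by apply: eq_bigr => z _; rewrite !rel_mxE -natrM mulnb.
rewrite -natr_sum; congr (_%:R).
rewrite cardsE -sum1_card [RHS]big_mkcond /=.
by apply: eq_bigr => z _; rewrite unfold_in; case: (_ && _).
Qed.

Lemma BMmul_of_scheme : is_assoc_scheme c ->
  forall M N, BM M -> BM N -> BM (M *m N).
Proof.
case=> _ _ Hp.
have Hrel : forall i j, BM (rel_mx c i *m rel_mx c j).
  move=> i j; have [p Pp] := fin_all_exists (Hp i j).
  exists (fun k => (p k)%:R); apply/matrixP => x y.
  rewrite relM_entry summxE (Pp (c x y) x y erefl).
  rewrite (bigD1 (c x y)) //= big1 ?addr0.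
    by rewrite mxE rel_mxE eqxx mulr1.
  by move=> k nk; rewrite mxE rel_mxE eq_sym (negbTE nk) mulr0.
move=> M N [w ->] [v ->].
rewrite mulmx_suml; apply: BMsumT => i; rewrite mulmx_sumr; apply: BMsumT => j.
by rewrite -scalemxAl -scalemxAr; apply: BMZ; apply: BMZ.
Qed.

Lemma BMcomm_of : (forall i j, rel_mx c i *m rel_mx c j = rel_mx c j *m rel_mx c i) ->
  forall M N, BM M -> BM N -> M *m N = N *m M.
Proof.
move=> H M N [w ->] [v ->].
rewrite !mulmx_suml; under eq_bigr do rewrite mulmx_sumr.
under [RHS]eq_bigr do rewrite mulmx_sumr.
rewrite exchange_big /=; apply: eq_bigr => i _; apply: eq_bigr => j _.
by rewrite -!scalemxAl -!scalemxAr H !scalerA mulrC.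
Qed.

Lemma rel_comm_of : is_commutative c ->
  forall i j, rel_mx c i *m rel_mx c j = rel_mx c j *m rel_mx c i.
Proof. by move=> H i j; apply/matrixP=> x y; rewrite !relM_entry H. Qed.

Lemma ct_rel r : ct (rel_mx c r) = (rel_mx c r)^T.
Proof. by apply/matrixP=> x y; rewrite !mxE conjC_nat. Qed.

Lemma BMct_of : is_assoc_scheme c -> forall M, BM M -> BM (ct M).
Proof.
case=> _ Ht _.
have [t Pt] := fin_all_exists Ht.
have Hrel : forall r, BM (ct (rel_mx c r)).
  move=> r; rewrite ct_rel.
  have -> : (rel_mx c r)^T = \sum_j (t j == r)%:R *: rel_mx c j.
    apply/matrixP=> x y; rewrite !mxE summxE (bigD1 (c x y)) //= big1 ?addr0.
      by rewrite !mxE eqxx mulr1 (Pt (c x y) x y erefl).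
    by move=> k nk; rewrite !mxE [c x y == k]eq_sym (negbTE nk) mulr0.
  by apply: BMsumT => j; apply: BMZ; apply: BMrel.
move=> M [w ->]; rewrite ct_sum; apply: BMsumT => i.
by rewrite ctZ; apply: BMZ.
Qed.

End BM.
From Stdlib Require Import Classical.
Section Eig.
Variable n' : nat.
Local Notation n := n'.+1.
Local Notation MX := 'M[algC]_n.
Variables (I : finType) (c : 'I_n -> 'I_n -> I).
Local Notation BM := (in_BM c).
Hypothesis HB1 : BM 1%:M.
Hypothesis HBM : forall M N, BM M -> BM N -> BM (M *m N).
Hypothesis HBC : forall M N, BM M -> BM N -> M *m N = N *m M.
Hypothesis HBct : forall M, BM M -> BM (ct M).

Lemma BMpoly N p : BM N -> BM (horner_mx N p).
Proof.
move=> hN; elim/poly_ind: p => [|p a IH]; first by rewrite rmorph0; exact: BM0.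
rewrite rmorphD rmorphM /= horner_mx_X horner_mx_C; apply: BMD.
  by rewrite -mulmxE; apply: HBM.
by rewrite -scalemx1; apply: BMZ.
Qed.

Lemma idemX (E : MX) k : E *m E = E -> E ^+ k.+1 = E.
Proof.
move=> hE; elim: k => [|k IH]; first by rewrite expr1.
by rewrite exprS IH -mulmxE.
Qed.

Lemma commBM M N : BM M -> BM N -> GRing.comm M N.
Proof. by move=> hM hN; rewrite /GRing.comm -!mulmxE HBC. Qed.

Lemma hmM (N : MX) (p q : {poly algC}) : horner_mx N (p * q) = horner_mx N p *m horner_mx N q.
Proof. by rewrite rmorphM. Qed.

Lemma hmD (N : MX) (p q : {poly algC}) : horner_mx N (p + q) = horner_mx N p + horner_mx N q.
Proof. by rewrite rmorphD. Qed.

Lemma hm1 (N : MX) : horner_mx N (1 : {poly algC}) = 1%:M.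
Proof. by rewrite rmorph1. Qed.

Lemma prim_nil E N : prim_idem c E -> BM N ->
  forall r : {poly algC}, r \is monic -> horner_mx N r *m E = 0 ->
  exists th m, horner_mx N (('X - th%:P) ^+ m) *m E = 0.
Proof.
move=> [BE EE nzE minE] BN.
have BP p := BMpoly p BN.
suff H : forall s (r : {poly algC}), (size r < s)%N -> r \is monic -> horner_mx N r *m E = 0 ->
    exists th m, horner_mx N (('X - th%:P) ^+ m) *m E = 0.
  by move=> r; apply: (H (size r).+1).
elim=> [//|s IH] r lt_rs mon_r hr.
have r0 : r != 0 by exact: monic_neq0.
have sz_r : size r != 1%N.
  apply/eqP => s1; move: hr; rewrite (size1_polyC (eq_leq s1)).
  have -> : r`_0 = 1 by move: mon_r; rewrite monicE /lead_coef s1 => /eqP.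
  by rewrite hm1 mul1mx => E0; rewrite E0 eqxx in nzE.
have [th rth] := closed_rootP r sz_r.
have [m [q nq Hr]] := multiplicity_XsubC r th.
rewrite r0 /= in nq.
have m_gt0 : (0 < m)%N.
  by case: m Hr => [|//] Hr; move: rth; rewrite Hr expr0 mulr1 (negbTE nq).
have cop : coprimep q (('X - th%:P) ^+ m).
  by apply: coprimep_expr; rewrite coprimep_XsubC.
have [[u1 u2] /= Hb] := Bezout_eq1_coprimepP _ _ cop.
set Xm := ('X - th%:P) ^+ m in Hr cop Hb *.
set F := horner_mx N (u1 * q); set G := horner_mx N (u2 * Xm).
have FG1 : F + G = 1%:M by rewrite /F /G -hmD Hb hm1.
have cE : forall p, horner_mx N p *m E = E *m horner_mx N p.
  by move=> p; rewrite HBC.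
have hrE : forall p, horner_mx N (p * r) *m E = 0.
  by move=> p; rewrite hmM -mulmxA hr mulmx0.
have FGE : F *m G *m E = 0.
  rewrite /F /G -hmM.
  have -> : u1 * q * (u2 * Xm) = (u1 * u2) * r by rewrite Hr; ring.
  exact: hrE.
have BFE : BM (F *m E) by apply: HBM => //; exact: BP.
have cF : E *m F = F *m E by rewrite /F cE.
have FEid : (F *m E) *m (F *m E) = F *m E.
  rewrite -mulmxA (mulmxA E F E) cF -mulmxA EE mulmxA.
  have -> : F *m F = F - F *m G by rewrite -{3}[F]mulmx1 -FG1 mulmxDr addrK.
  by rewrite mulmxBl FGE subr0.
have FEE : (F *m E) *m E = F *m E by rewrite -mulmxA EE.
case: (minE _ BFE FEid FEE) => [FE0|FEE'].
  have qE : horner_mx N q *m E = 0.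
    have -> : E = (F + G) *m E by rewrite FG1 mul1mx.
    rewrite mulmxDl mulmxDr FE0 mulmx0 add0r mulmxA /G -hmM.
    have -> : q * (u2 * Xm) = u2 * r by rewrite Hr; ring.
    exact: hrE.
  apply: (IH q) => //.
    have q0 : q != 0 by apply/eqP=> q0; move: r0; rewrite Hr q0 mul0r eqxx.
    move: lt_rs; rewrite Hr (size_mul q0 (monic_neq0 (monic_exp m (monicXsubC th)))).
    rewrite size_exp_XsubC addnS /= ltnS => lt_rs; apply: leq_trans lt_rs.
    by rewrite -addn1 leq_add2l.
  move: mon_r; rewrite Hr !monicE lead_coefM.
  by move: (monic_exp m (monicXsubC th)); rewrite monicE => /eqP ->; rewrite mulr1.
exists th, m.
rewrite -FEE' mulmxA /F -hmM.
have -> : Xm * (u1 * q) = u1 * r by rewrite Hr; ring.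
exact: hrE.
Qed.

Lemma nilp_eq0 (K : MX) m : BM K -> K ^+ m.+1 = 0 -> K = 0.
Proof.
move=> hK Km; apply: ct_mul_eq0.
have cK : GRing.comm K (ct K) by apply: commBM => //; exact: HBct.
apply: (@herm_nil _ (K * ct K) m).
  by change (ct (K *m ct K) = K *m ct K); rewrite ctM ctK.
by rewrite exprMn_comm // Km mul0r.
Qed.

Lemma eigen_prim E B : prim_idem c E -> BM B -> exists th, B *m E = th *: E.
Proof.
move=> hE hB; have [BE EE nzE _] := hE.
have CH : horner_mx B (char_poly B) *m E = 0 by rewrite Cayley_Hamilton mul0mx.
have [th [m Hm]] := prim_nil hE hB (char_poly_monic B) CH.
exists th.
have BK : BM (B - th%:M) by apply: BMB => //; rewrite -scalemx1; apply: BMZ.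
have hX : horner_mx B (('X - th%:P) ^+ m) = (B - th%:M) ^+ m.
  by rewrite rmorphXn rmorphB /= horner_mx_X horner_mx_C.
rewrite hX in Hm.
have K0 : (B - th%:M) *m E = 0.
  apply: (@nilp_eq0 _ m); first exact: HBM.
  have cK : GRing.comm (B - th%:M) E by apply: commBM.
  change (((B - th%:M) * E) ^+ m.+1 = 0).
  rewrite exprMn_comm // (idemX m EE) exprS -mulrA.
  by change ((B - th%:M) *m ((B - th%:M) ^+ m *m E) = 0); rewrite Hm mulmx0.
by apply/eqP; rewrite -subr_eq0 -mul_scalar_mx -mulmxBl K0.
Qed.

Lemma scal_inj p q (E : 'M[algC]_(p, q)) a b : E != 0 -> a *: E = b *: E -> a = b.
Proof.
move=> nz H; apply/eqP; rewrite -subr_eq0.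
have : (a - b) *: E == 0 by rewrite scalerBl H subrr.
by rewrite scaler_eq0 (negbTE nz) orbF.
Qed.

Lemma prim_herm E : prim_idem c E -> ct E = E.
Proof.
move=> hE; have [BE EE nzE _] := hE.
have [th Hth] := eigen_prim hE (HBct BE).
have nz : ct E *m E != 0.
  apply/eqP=> H0; move: (tr_ct_gt0 nzE).
  by rewrite (HBC BE (HBct BE)) H0 mxtrace0 ltxx.
have th0 : th != 0 by apply: contra nz; rewrite Hth => /eqP ->; rewrite scale0r.
have H1 : ct E *m E = th^* *: ct E.
  by rewrite -ctZ -Hth ctM ctK.
have H2 : th *: E = th^* *: ct E by rewrite -Hth H1.
have EEc : ct E *m ct E = ct E by rewrite -ctM EE.
have thc0 : th^* != 0 by rewrite conjC_eq0.
have Ec : ct E = (th / th^*) *: E by rewrite mulrC -scalerA H2 scalerA mulVf // scale1r.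
have Hr : (th / th^*) * (th / th^*) = th / th^*.
  have H3 : ct E *m ct E = ((th / th^*) * (th / th^*)) *: E.
    by rewrite Ec -scalemxAl -scalemxAr EE scalerA.
  rewrite EEc {1}Ec in H3.
  by symmetry; apply: (scal_inj nzE).
have r1 : th / th^* = 1.
  have r0 : th / th^* != 0 by rewrite mulf_neq0 // invr_eq0.
  by apply: (mulfI r0); rewrite Hr mulr1.
by rewrite Ec r1 scale1r.
Qed.

Lemma prim_orth E F : prim_idem c E -> prim_idem c F -> E != F -> E *m F = 0.
Proof.
move=> [BE EE nzE minE] [BF FF nzF minF] neq.
have cEF : E *m F = F *m E by rewrite HBC.
have BG : BM (E *m F) by exact: HBM.
have GG : (E *m F) *m (E *m F) = E *m F.
  by rewrite -mulmxA (mulmxA F E F) -cEF -mulmxA FF mulmxA EE.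
have GE : (E *m F) *m E = E *m F by rewrite -mulmxA -cEF mulmxA EE.
have GF : (E *m F) *m F = E *m F by rewrite -mulmxA FF.
case: (minE _ BG GG GE) => // GE'; case: (minF _ BG GG GF) => // GF'.
by move: neq; rewrite -{1}GE' GF' eqxx.
Qed.

Lemma prim_below_rank k F : (\rank F <= k)%N -> BM F -> F *m F = F -> F != 0 ->
  exists G, prim_idem c G /\ G *m F = G.
Proof.
elim: k F => [|k IH] F rk BF FF nzF.
  by move: rk; rewrite leqn0 mxrank_eq0 (negbTE nzF).
case: (classic (exists H, [/\ BM H, H *m H = H, H *m F = H, H != 0 & H != F])).
  move=> [H [BH HH HF nzH neH]].
  have rkH : (\rank H < \rank F)%N.
    have sHF : (H <= F)%MS by rewrite -HF submxMl.
    rewrite ltn_neqAle -HF mxrankM_maxr andbT HF.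
    apply/negP=> /eqP eqr; case/negP: neH.
    have eqHF : (H == F)%MS by rewrite -(mxrank_leqif_eq sHF).2 eqr.
    move/andP: eqHF => [_ /submxP [D hD]].
    apply/eqP; rewrite -HF HBC // hD -mulmxA HH.
    by rewrite -hD.
  have [G [pG GH]] := IH H (leq_trans rkH rk) BH HH nzH.
  by exists G; split=> //; rewrite -GH -mulmxA HF.
move=> nH; exists F; split=> //; split=> // H BH HH HF.
case: (eqVneq H 0) => [->|nzH]; first by left.
case: (eqVneq H F) => [->|neH]; first by right.
by case: nH; exists H; split=> //; rewrite HBC.
Qed.

Lemma prim_below F : BM F -> F *m F = F -> F != 0 ->
  exists G, prim_idem c G /\ G *m F = G.
Proof. exact: (@prim_below_rank (\rank F)). Qed.

Lemma prim_complete (J : finType) (E : J -> MX) : injective E ->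
  (forall j, prim_idem c (E j)) -> (forall F, prim_idem c F -> exists j, F = E j) ->
  \sum_j E j = 1%:M.
Proof.
move=> injE pE allE.
have EjS : forall j, E j *m (\sum_k E k) = E j.
  move=> j; rewrite mulmx_sumr (bigD1 j) //= big1 ?addr0.
    by case: (pE j).
  move=> k nk; apply: prim_orth => //.
  by apply/negP=> /eqP /injE ejk; rewrite ejk eqxx in nk.
have BS : BM (\sum_k E k) by apply: BMsumT => k; case: (pE k).
set S := \sum_k E k in EjS BS *.
have SS : S *m S = S.
  by rewrite {1}/S mulmx_suml; apply: eq_bigr => k _; exact: EjS.
set F := 1%:M - S.
have BF : BM F by apply: BMB.
have EF : forall j, E j *m F = 0 by move=> j; rewrite mulmxBr mulmx1 EjS subrr.
have FF : F *m F = F.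
  by rewrite mulmxBl mul1mx mulmxBr mulmx1 SS subrr subr0.
case: (eqVneq F 0) => [F0|nzF].
  by move/eqP: F0; rewrite subr_eq0 => /eqP <-.
have [G [pG GF]] := prim_below BF FF nzF.
have [j Gj] := allE _ pG.
by move: pG => [_ _ nzG _]; move: nzG; rewrite -GF Gj EF eqxx.
Qed.

Lemma prim_eq_of_eig X Y : prim_idem c X -> prim_idem c Y ->
  (forall r th, rel_mx c r *m X = th *: X -> rel_mx c r *m Y = th *: Y) -> X = Y.
Proof.
move=> pX pY H.
have [[w hw] XX nzX _] := pX; have [BY YY nzY _] := pY.
have [th Hth] := fin_all_exists (fun r => eigen_prim pX (BMrel c r)).
have XX' : X *m X = (\sum_r w r * th r) *: X.
  rewrite {1}hw mulmx_suml scaler_suml; apply: eq_bigr => r _.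
  by rewrite -scalemxAl Hth scalerA.
have s1 : \sum_r w r * th r = 1.
  by apply: (scal_inj nzX); rewrite -XX' XX scale1r.
have XY : X *m Y = Y.
  rewrite {1}hw mulmx_suml -[Y in RHS]scale1r -s1 scaler_suml; apply: eq_bigr => r _.
  by rewrite -scalemxAl (H _ _ (Hth r)) scalerA.
case: (eqVneq X Y) => // neq.
by move: nzY; rewrite -XY (prim_orth pX pY neq) eqxx.
Qed.

End Eig.
Section Spec.
Variable n' : nat.
Local Notation n := n'.+1.
Local Notation MX := 'M[algC]_n.

Lemma eig_spec (J : finType) (E : J -> MX) (lam : J -> algC) (M : MX) :
  \sum_j E j = 1%:M -> (forall j, E j != 0) ->
  (forall j, M *m E j = lam j *: E j) -> (forall j, M *m E j = E j *m M) ->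
  forall e, eigenvalue M e <-> exists j, e = lam j.
Proof.
move=> SE nzE ME cE e; split.
  move/eigenvalueP=> [v vM nzv].
  have : v = \sum_j v *m E j by rewrite -mulmx_sumr SE mulmx1.
  case: (pickP (fun j => v *m E j != 0)) => [j nzj|none].
    move=> _; exists j.
    have H1 : (v *m E j) *m M = e *: (v *m E j).
      by rewrite -mulmxA -cE mulmxA vM -scalemxAl.
    have H2 : (v *m E j) *m M = lam j *: (v *m E j).
      by rewrite -mulmxA -cE ME -scalemxAr.
    by apply: (scal_inj nzj); rewrite -H1 H2.
  rewrite big1 => [v0|j _]; last by move: (none j) => /negbFE /eqP.
  by rewrite v0 eqxx in nzv.
move=> [j ->]; apply/eigenvalueP.
case: (pickP (fun r => row r (E j) != 0)) => [r nzr|none]; last first.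
  have E0 : E j = 0.
    by apply/row_matrixP => r; move: (none r) => /negbFE /eqP ->; rewrite row0.
  by move: (nzE j); rewrite E0 eqxx.
exists (row r (E j)) => //.
rewrite -row_mul -cE ME; apply/rowP => k; rewrite !mxE //.
Qed.

Lemma all_in_uniq (T : finType) (s : seq T) : uniq s -> size s = #|T| -> forall x, x \in s.
Proof.
move=> us ss x; apply/negPn/negP => nx.
have : uniq (x :: s) by rewrite /= nx us.
move/card_uniqP => /= H; move: (max_card (mem (x :: s))).
by rewrite H ss ltnn.
Qed.

Lemma sum_uniq (T : finType) (V : nmodType) (s : seq T) (F : T -> V) : uniq s -> size s = #|T| ->
  \sum_j F j = \sum_(j <- s) F j.
Proof.
move=> us ss; apply: perm_big; apply: uniq_perm => //; first exact: index_enum_uniq.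
by move=> x; rewrite mem_index_enum (all_in_uniq us ss).
Qed.

Lemma herm_eig (A X : MX) th : ct A = A -> ct X = X -> X != 0 -> A *m X = X *m A ->
  A *m X = th *: X -> th^* = th.
Proof.
move=> hA hX nzX cAX H; apply: (scal_inj nzX).
by rewrite -hX -ctZ -H ctM hA hX -cAX H.
Qed.

Lemma bound (P : 'I_n -> 'I_n -> bool) (k : nat) (X : MX) th :
  (forall x y, P x y = P y x) -> (forall x, #|[set y | P x y]| = k) -> X != 0 ->
  adjmx P *m X = th *: X -> `|th| <= k%:R.
Proof.
move=> Ps Pk nzX H.
have [y0 [x0 nz0]] : exists y0 x0, X x0 y0 != 0.
  case: (pickP (fun p : 'I_n * 'I_n => X p.1 p.2 != 0)) => [[x y] /= nz|none].
    by exists y, x.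
  case/negP: nzX; apply/eqP/matrixP => x y; rewrite mxE.
  by move: (none (x, y)) => /= /negbFE /eqP.
set S := \sum_x `|X x y0|.
have S0 : 0 < S.
  rewrite /S (bigD1 x0) //= ltr_pwDl ?normr_gt0 //.
  by apply: sumr_ge0 => x _; exact: normr_ge0.
have col : forall z, \sum_x (P x z)%:R = k%:R :> algC.
  move=> z; rewrite -(Pk z) cardsE -sum1_card natr_sum [RHS]big_mkcond /=.
  by apply: eq_bigr => x _; rewrite unfold_in Ps; case: (P z x).
have H1 : `|th| * S <= k%:R * S.
  rewrite /S !mulr_sumr.
  apply: (@le_trans _ _ (\sum_x \sum_z (P x z)%:R * `|X z y0|)).
    apply: ler_sum => x _.
    have : (adjmx P *m X) x y0 = th * X x y0 by rewrite H mxE.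
    rewrite mxE => e; rewrite -normrM -e.
    apply: (le_trans (ler_norm_sum _ _ _)); apply: ler_sum => z _.
    by rewrite mxE normrM normr_nat.
  rewrite exchange_big /= le_eqVlt; apply/orP; left; apply/eqP; apply: eq_bigr => z _.
  by rewrite -mulr_suml col.
by rewrite -(ler_pM2r S0).
Qed.

End Spec.

Section Labels.
Variable n' : nat.
Local Notation n := n'.+1.
Variable c : 'I_n -> 'I_n -> 'I_5.
Hypothesis Hsym : forall x y, (nat_of_ord (c x y) <= 2)%N -> c y x = c x y.
Hypothesis Htr34 : forall x y, (nat_of_ord (c x y) == 3)%N = (nat_of_ord (c y x) == 4)%N.

Lemma symzE x y : symz c x y = if (nat_of_ord (c x y) == 4)%N then inord 3 else inord (c x y).
Proof. by []. Qed.

Lemma symz_sym x y : symz c x y = symz c y x.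
Proof.
rewrite !symzE.
have := ltn_ord (c x y); have := ltn_ord (c y x).
have H1 := Htr34 x y; have H2 := Htr34 y x.
case Exy: (nat_of_ord (c x y) <= 2)%N.
  by rewrite (Hsym Exy).
case Eyx: (nat_of_ord (c y x) <= 2)%N.
  by rewrite (Hsym Eyx).
move: Exy Eyx H1 H2.
case: (c x y) => [[|[|[|[|[|]]]]] ?] //=; case: (c y x) => [[|[|[|[|[|]]]]] ?] //=.
Qed.

Lemma At_low (r : 'I_5) : (nat_of_ord r <= 2)%N -> rel_mx (symz c) (inord r) = rel_mx c r.
Proof.
move=> hr; apply/matrixP=> x y; rewrite !rel_mxE symzE.
have hr4 : (r < 4)%N by apply: leq_ltn_trans hr _.
case E4: (nat_of_ord (c x y) == 4)%N.
  have -> : (c x y == r) = false.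
    by apply/negP => /eqP e; move: E4 hr; rewrite e => /eqP ->.
  rewrite -val_eqE /= !inordK //.
  by have -> : (3 == r :> nat) = false by apply/eqP => e; move: hr; rewrite -e.
have hc4 : (c x y < 4)%N.
  by have := ltn_ord (c x y); rewrite ltnS leq_eqVlt E4.
by rewrite -val_eqE /= !inordK.
Qed.

Lemma At_3 : rel_mx (symz c) (inord 3) = rel_mx c (inord 3) + rel_mx c (inord 4).
Proof.
apply/matrixP=> x y; rewrite !mxE symzE.
case: (c x y) => [[|[|[|[|[|k]]]]] hk] //=;
  rewrite -!val_eqE /= ?inordK //= ?addr0 ?add0r //.
Qed.

Lemma A3T : (rel_mx c (inord 3))^T = rel_mx c (inord 4).
Proof.
apply/matrixP=> x y; rewrite !mxE -!val_eqE /= !inordK //.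
by rewrite (Htr34 y x).
Qed.

End Labels.

Lemma idem_mul n' (X Y : 'M[algC]_n'.+1) : X *m X = X -> Y *m Y = Y -> X *m Y = Y *m X ->
  (X *m Y) *m (X *m Y) = X *m Y.
Proof.
move=> XX YY XY; rewrite !mulmxA -(mulmxA X Y X) -XY mulmxA XX -mulmxA YY //.
Qed.

Lemma tr_sum n' (J : finType) (F : J -> 'M[algC]_n'.+1) : \tr (\sum_j F j) = \sum_j \tr (F j).
Proof. rewrite /mxtrace; under eq_bigr do rewrite summxE. by rewrite exchange_big. Qed.

Lemma trmxZ' n' (a : algC) (X : 'M[algC]_n'.+1) : (a *: X)^T = a *: X^T.
Proof. by apply/matrixP => x y; rewrite !mxE. Qed.

Lemma trmx_sum' n' (J : finType) (F : J -> 'M[algC]_n'.+1) : (\sum_j F j)^T = \sum_j (F j)^T.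
Proof. by apply/matrixP => x y; rewrite !mxE !summxE; apply: eq_bigr => j _; rewrite mxE. Qed.

Unset Implicit Arguments.

Theorem proposition3p7 (n : nat) (c : 'I_n -> 'I_n -> 'I_5)
    (E : 'I_5 -> 'M[algC]_n) (Et : 'I_4 -> 'M[algC]_n) :
  (* commutative association scheme with relations R_0..R_4 *)
  is_assoc_scheme c -> is_commutative c ->
  (forall x y, (c x y == ord0) = (x == y)) ->
  (forall i, exists x y, c x y = i) ->
  (* R_i^T = R_i for i <= 2, R_3^T = R_4 *)
  (forall x y, (nat_of_ord (c x y) <= 2)%N -> c y x = c x y) ->
  (forall x y, (nat_of_ord (c x y) == 3)%N = (nat_of_ord (c y x) == 4)%N) ->
  (* E_0..E_4 are the primitive idempotents, E_0 = J/|X| *)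
  injective E -> (forall j, prim_idem c (E j)) ->
  (forall F, prim_idem c F -> exists j, F = E j) ->
  E ord0 = (n%:R)^-1 *: const_mx 1 ->
  (* symmetrization is amorphic, with primitive idempotents Et_0..Et_3 *)
  amorphic (symz c) ->
  injective Et -> (forall j, prim_idem (symz c) (Et j)) ->
  (forall F, prim_idem (symz c) F -> exists j, F = Et j) ->
  (* numbering of the Et_j *)
  (exists (k : 'I_4 -> nat) (a b : 'I_4 -> algC), forall i, i != ord0 ->
     [/\ forall x, #|[set y | symz c x y == i]| = k i,
         rel_mx (symz c) i *m Et ord0 = (k i)%:R *: Et ord0,
         rel_mx (symz c) i *m Et i = b i *: Et i,
         forall j, j != ord0 -> j != i -> rel_mx (symz c) i *m Et j = a i *: Et j
       & a i != b i]) ->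
  (* Et_3 is not among E_1..E_4 *)
  (forall j : 'I_5, j != ord0 -> Et (inord 3) != E j) ->
  forall i : 'I_5, ((nat_of_ord i == 1) || (nat_of_ord i == 2))%N ->
    exists s : seq algC, [/\ uniq s, size s = 5%N &
      forall e, eigenvalue (adjmx (fun x y => (c x y == i) || (nat_of_ord (c x y) == 3)%N)) e
                <-> e \in s].
Proof.
case: n c E Et => [|n'] c E Et Hsch Hcom Hdiag Hne Hsym Htr34 injE primE allE E0 Hamor
  injEt primEt allEt Hnum Het3 i Hi.
  by case: (Hne ord0) => [[[]]].
pose A := rel_mx c. pose At := rel_mx (symz c).
have [Hsch_s _ Hdiag_s _] := Hamor.
have HB1 : in_BM c 1%:M.
  have -> : 1%:M = A ord0 by apply/matrixP=> x y; rewrite /A rel_mxE Hdiag mxE.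
  exact: BMrel.
have HBM := BMmul_of_scheme Hsch.
have HBC := BMcomm_of (rel_comm_of Hcom).
have HBct := BMct_of Hsch.
have At0 : At ord0 = 1%:M by apply/matrixP=> x y; rewrite /At rel_mxE Hdiag_s mxE.
have HB1s : in_BM (symz c) 1%:M by rewrite -At0; exact: BMrel.
have HBMs := BMmul_of_scheme Hsch_s.
have Atlow : forall r : 'I_5, (r <= 2)%N -> At (inord r) = A r := @At_low _ c.
have At3 : At (inord 3) = A (inord 3) + A (inord 4) := @At_3 _ c.
have AtBM : forall r, in_BM c (At r).
  move=> r; case: (leqP r 2) => hr.
    have -> : r = inord (inord r : 'I_5) by apply/val_inj; rewrite /= !inordK // (leq_ltn_trans hr).
    by rewrite Atlow ?inordK ?(leq_ltn_trans hr) //; exact: BMrel.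
  have -> : r = inord 3 by apply/val_inj; rewrite /= inordK //; have := ltn_ord r; lia.
  by rewrite At3; apply: BMD; exact: BMrel.
have BMsub : forall M, in_BM (symz c) M -> in_BM c M.
  by move=> M [w ->]; apply: BMsumT => r; apply: BMZ; exact: AtBM.
have HBCs : forall M N, in_BM (symz c) M -> in_BM (symz c) N -> M *m N = N *m M.
  by move=> M N hM hN; apply: HBC; apply: BMsub.
have HBcts := BMct_of Hsch_s.
have HP0 : forall r k, exists x, A r *m E k = x *: E k.
  move=> r k; exact: (eigen_prim HB1 HBM HBC HBct (primE k) (BMrel c r)).
have [P HP] := fin_all_exists (fun r => fin_all_exists (HP0 r)).
have nzE : forall k, E k != 0 by move=> k; case: (primE k).
have nzEt : forall j, Et j != 0 by move=> j; case: (primEt j).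
have EE : forall k, E k *m E k = E k by move=> k; case: (primE k).
have EtEt : forall j, Et j *m Et j = Et j by move=> j; case: (primEt j).
have BE : forall k, in_BM c (E k) by move=> k; case: (primE k).
have BEts : forall j, in_BM (symz c) (Et j) by move=> j; case: (primEt j).
have BEt : forall j, in_BM c (Et j) by move=> j; apply: BMsub.
have Pu : forall r k x, A r *m E k = x *: E k -> P r k = x.
  by move=> r k x H; apply: (scal_inj (nzE k)); rewrite -HP H.
have SumE := prim_complete HB1 HBM HBC injE primE allE.
have orthE : forall k l, k != l -> E k *m E l = 0.
  move=> k l kl; apply: (prim_orth HBM HBC (primE k) (primE l)).
  by apply: contra kl => /eqP /injE ->.
have SumEt := prim_complete HB1s HBMs HBCs injEt primEt allEt.
have orthEt : forall k l, k != l -> Et k *m Et l = 0.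
  move=> k l kl; apply: (prim_orth HBMs HBCs (primEt k) (primEt l)).
  by apply: contra kl => /eqP /injEt ->.
case: Hnum => kk [a [b Hnum]].
pose th (r j : 'I_4) : algC := if r == ord0 then 1 else if j == ord0 then (kk r)%:R
  else if j == r then b r else a r.
have HAt : forall r j, At r *m Et j = th r j *: Et j.
  move=> r j; rewrite /th; case: eqP => [->|/eqP r0].
    by rewrite At0 mul1mx scale1r.
  have [_ H0 Hr Ho _] := Hnum r r0.
  case: eqP => [->|/eqP j0] //; case: eqP => [->|/eqP jr] //; exact: Ho.
have tauP : forall k, exists j, Et j *m E k = E k.
  move=> k; case: (pickP (fun j => Et j *m E k != 0)) => [j nzj|none]; last first.
    move: (nzE k); rewrite -[E k]mul1mx -SumEt mulmx_suml big1 ?eqxx // => j _.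
    by move: (none j) => /negbFE /eqP.
  exists j.
  have [be Hbe] := eigen_prim HB1 HBM HBC HBct (primE k) (BEt j).
  have idm := idem_mul (EtEt j) (EE k) (HBC _ _ (BEt j) (BE k)).
  have be0 : be != 0 by apply: contra nzj; rewrite Hbe => /eqP ->; rewrite scale0r.
  rewrite {2}Hbe -scalemxAr -mulmxA EE Hbe scalerA in idm.
  have : be * be = be * 1 by rewrite mulr1; apply: (scal_inj (nzE k)).
  by move/(mulfI be0) => be1; rewrite Hbe be1 scale1r.
have [tau Htau] := fin_all_exists tauP.
have EtE0 : forall j k, j != tau k -> Et j *m E k = 0.
  by move=> j k jk; rewrite -(Htau k) mulmxA orthEt ?mul0mx.
have Etdec : forall j, Et j = \sum_(k | tau k == j) E k.
  move=> j; rewrite -[Et j]mulmx1 -SumE mulmx_sumr (bigID (fun k => tau k == j)) /=.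
  rewrite [X in _ + X]big1 ?addr0.
    by apply: eq_bigr => k /eqP <-; rewrite Htau.
  by move=> k nk; rewrite EtE0 // eq_sym.
have HAtE : forall r k, At r *m E k = th r (tau k) *: E k.
  by move=> r k; rewrite -{1}(Htau k) mulmxA HAt -scalemxAl Htau.
pose J : 'M[algC]_(n'.+1) := const_mx 1.
have Jdef : J = \sum_r At r.
  apply/matrixP => x y; rewrite mxE summxE (bigD1 (symz c x y)) //= big1 ?addr0.
    by rewrite /At rel_mxE eqxx.
  by move=> r nr; rewrite /At rel_mxE eq_sym (negbTE nr).
have n0 : (n'.+1)%:R != 0 :> algC by rewrite pnatr_eq0.
have JE : J = (n'.+1)%:R *: E ord0 by rewrite E0 scalerA mulfV // scale1r.
have tau0 : forall k, tau k = ord0 -> k = ord0.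
  move=> k tk; apply/eqP; apply/negPn/negP => k0.
  have h1 : J *m E k = 0 by rewrite JE -scalemxAl orthE ?scaler0 // eq_sym.
  have h2 : J *m E k = (\sum_r th r ord0) *: E k.
    by rewrite Jdef mulmx_suml scaler_suml; apply: eq_bigr => r _; rewrite HAtE tk.
  have s0 : \sum_r th r ord0 = (1 + \sum_(r | r != ord0) kk r)%:R.
    rewrite (bigD1 ord0) //= natrD natr_sum {1}/th eqxx; congr (_ + _).
    by apply: eq_bigr => r nr; rewrite /th (negbTE nr) eqxx.
  have : (\sum_r th r ord0) *: E k = 0 by rewrite -h2 h1.
  by move/eqP; rewrite scaler_eq0 (negbTE (nzE k)) orbF s0 pnatr_eq0 add1n.
have fibne : forall j, exists k, tau k = j.
  move=> j; case: (pickP (fun k => tau k == j)) => [k /eqP tk|none]; first by exists k.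
  by move: (nzEt j); rewrite Etdec big_pred0 ?eqxx // => k; rewrite none.
have tau00 : tau ord0 = ord0.
  by have [k tk] := fibne ord0; move: (tk); rewrite (tau0 _ tk).
have [hi1 hi2] : (0 < i)%N /\ (i < 3)%N by case/orP: Hi => /eqP ->.
pose i4 : 'I_4 := inord i. pose j4 : 'I_4 := inord (3 - i). pose t3 : 'I_4 := inord 3.
have vi4 : (i4 : nat) = i by rewrite inordK //; lia.
have vj4 : (j4 : nat) = (3 - i)%N by rewrite inordK //; lia.
have vt3 : (t3 : nat) = 3%N by rewrite inordK.
have i40 : (i4 == ord0) = false by apply/negbTE; rewrite -val_eqE /= vi4; apply/eqP; lia.
have j40 : (j4 == ord0) = false by apply/negbTE; rewrite -val_eqE /= vj4; apply/eqP; lia.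
have t30 : (t3 == ord0) = false by apply/negbTE; rewrite -val_eqE /= vt3.
have i4t3 : (i4 == t3) = false by apply/negbTE; rewrite -val_eqE /= vi4 vt3; apply/eqP; lia.
have j4t3 : (j4 == t3) = false by apply/negbTE; rewrite -val_eqE /= vj4 vt3; apply/eqP; lia.
have i4j4 : (i4 == j4) = false by apply/negbTE; rewrite -val_eqE /= vj4 vi4; apply/eqP; lia.
have j4i4 : (j4 == i4) = false by rewrite eq_sym.
have t3i4 : (t3 == i4) = false by rewrite eq_sym.
have t3j4 : (t3 == j4) = false by rewrite eq_sym.
have o0i4 : (ord0 == i4) = false by rewrite eq_sym.
have o0j4 : (ord0 == j4) = false by rewrite eq_sym.
have o0t3 : (ord0 == t3) = false by rewrite eq_sym.
have [u Hu] := fibne i4. have [w Hw] := fibne j4. have [p Hp] := fibne t3.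
have tneq : forall x y, tau x != tau y -> x != y by move=> x y; apply: contraNneq => ->.
have p0 : p != ord0 by apply: tneq; rewrite Hp tau00 t30.
have [q Hq qp] : exists2 q, tau q = t3 & q != p.
  case: (pickP (fun k => (tau k == t3) && (k != p))) => [q /andP [/eqP tq qp]|none].
    by exists q.
  have : Et t3 = E p.
    rewrite Etdec (big_pred1 p) // => k.
    case: (k =P p) => [->|/eqP kp]; first by rewrite /= Hp !eqxx.
    by move: (none k) => /=; rewrite kp andbT (negbTE kp) => ->.
  by move/eqP; rewrite (negbTE (Het3 p p0)).
pose L := [:: ord0; u; w; p; q].
have uL : uniq L.
  rewrite /L /= !inE !negb_or !andbT.
  rewrite (eq_sym p q) qp andbT !tneq // ?tau00 ?Hu ?Hw ?Hp ?Hq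
     ?o0i4 ?o0j4 ?o0t3 ?i4j4 ?i4t3 ?j4t3 //.
have sL : size L = #|'I_5| by rewrite card_ord.
have allL := all_in_uniq uL sL.
have fibu : forall k, tau k = i4 -> k = u.
  move=> k tk; move: (allL k); rewrite !inE => /orP [/eqP e|/orP [/eqP e|/orP [/eqP e|/orP [/eqP e|/eqP e]]]] //; move: tk; rewrite e;
  by rewrite ?tau00 ?Hw ?Hp ?Hq => /eqP; rewrite ?o0i4 ?j4i4 ?t3i4.
have fibw : forall k, tau k = j4 -> k = w.
  move=> k tk; move: (allL k); rewrite !inE => /orP [/eqP e|/orP [/eqP e|/orP [/eqP e|/orP [/eqP e|/eqP e]]]] //; move: tk; rewrite e;
  by rewrite ?tau00 ?Hu ?Hp ?Hq => /eqP; rewrite ?o0j4 ?i4j4 ?t3j4.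
have fib3 : forall k, tau k = t3 -> (k == p) || (k == q).
  move=> k tk; move: (allL k); rewrite !inE => /orP [/eqP e|/orP [/eqP e|/orP [/eqP e|/orP [/eqP e|/eqP e]]]]; rewrite e ?eqxx ?orbT //;
  move: tk; rewrite e ?tau00 ?Hu ?Hw => /eqP; by rewrite ?o0t3 ?i4t3 ?j4t3.
have EtU : Et i4 = E u.
  rewrite Etdec (big_pred1 u) // => k; apply/eqP/eqP => [/fibu //|->]; exact: Hu.
have EtW : Et j4 = E w.
  rewrite Etdec (big_pred1 w) // => k; apply/eqP/eqP => [/fibw //|->]; exact: Hw.
have Et00 : Et ord0 = E ord0.
  rewrite Etdec (big_pred1 ord0) // => k; apply/eqP/eqP => [/tau0 //|->]; exact: tau00.
have Et3 : Et t3 = E p + E q.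
  rewrite Etdec (bigD1 p) /= ?Hp ?eqxx //; congr (_ + _).
  rewrite (big_pred1 q) // => k; apply/andP/eqP => [[/eqP /fib3 /orP [] /eqP -> //]|->].
    by rewrite eqxx.
  by rewrite Hq eqxx qp.
have hermE : forall k, ct (E k) = E k := fun k => prim_herm HB1 HBM HBC HBct (primE k).
have hermEt : forall j, ct (Et j) = Et j := fun j => prim_herm HB1s HBMs HBCs HBcts (primEt j).
have AtSym : forall r, (At r)^T = At r.
  by move=> r; apply/matrixP=> x y; rewrite !mxE (symz_sym Hsym Htr34).
have symEt : forall j, (Et j)^T = Et j.
  move=> j; have [[w' ->] _ _ _] := primEt j.
  by rewrite trmx_sum'; apply: eq_bigr => r _; rewrite trmxZ' AtSym.
have ctAt : forall r, ct (At r) = At r by move=> r; rewrite ct_rel AtSym.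
pose o3 : 'I_5 := inord 3. pose o4 : 'I_5 := inord 4.
have ctA3 : ct (A o3) = A o4 by rewrite ct_rel; exact: A3T.
have A4T : (A o4)^T = A o3 by rewrite /A /o3 /o4 -(A3T Htr34) trmxK.
have P4c : forall k, P o4 k = (P o3 k)^*.
  move=> k; apply: Pu.
  have : ct (A o3 *m E k) = ct (P o3 k *: E k) by rewrite HP.
  by rewrite ctM ctZ ctA3 hermE (HBC _ _ (BE k) (BMrel c o4)).
have P34sym : forall k, (E k)^T = E k -> P o4 k = P o3 k.
  move=> k sk; apply: Pu.
  have : (A o3 *m E k)^T = (P o3 k *: E k)^T by rewrite HP.
  by rewrite trmx_mul (A3T Htr34) sk trmxZ' sk (HBC _ _ (BE k) (BMrel c o4)).
have Psum : forall k, P o3 k + P o4 k = th t3 (tau k).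
  move=> k; apply: (scal_inj (nzE k)).
  by rewrite scalerDl -!HP -mulmxDl -At3 HAtE.
have PAlow : forall (r : 'I_5) k, (r <= 2)%N -> P r k = th (inord r) (tau k).
  by move=> r k hr; apply: Pu; rewrite -Atlow // HAtE.
have PAi : forall k, P i k = th i4 (tau k) by move=> k; rewrite PAlow //; lia.
have thR : forall r j, (th r j)^* = th r j.
  by move=> r j; apply: (herm_eig (ctAt r) (hermEt j) (nzEt j) (HBCs _ _ (BMrel _ r) (BEts j)) (HAt r j)).
have symR : forall k, (E k)^T = E k -> (P o3 k)^* = P o3 k.
  by move=> k sk; rewrite -P4c P34sym.
have sym0 : (E ord0)^T = E ord0 by rewrite -Et00 symEt.
have symu : (E u)^T = E u by rewrite -EtU symEt.
have symw : (E w)^T = E w by rewrite -EtW symEt.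
have DE : forall k, (A o3 - A o4) *m E k = (P o3 k - (P o3 k)^*) *: E k.
  by move=> k; rewrite mulmxBl !HP P4c scalerBl.
have o34 : (o3 == o4) = false by rewrite -val_eqE /= !inordK.
have Dne : A o3 - A o4 != 0.
  apply/eqP => /eqP; rewrite subr_eq0 => /eqP e.
  have [x [y hxy]] := Hne o3.
  move: (congr1 (fun M : 'M[algC]_n'.+1 => M x y) e); rewrite /A !rel_mxE hxy eqxx o34 /=.
  by move/eqP; rewrite oner_eq0.
have nonreal : forall q', (forall k, k != q' -> (P o3 k)^* = P o3 k) -> False.
  move=> q' Hr.
  have DD : A o3 - A o4 = (P o3 q' - (P o3 q')^*) *: E q'.
    rewrite -[A o3 - A o4]mulmx1 -SumE mulmx_sumr (bigD1 q') //= big1 ?addr0 ?DE //.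
    by move=> k kq; rewrite DE Hr ?subrr ?scale0r.
  set d := P o3 q' - (P o3 q')^* in DD.
  have d0 : d != 0 by apply: contra Dne; rewrite DD => /eqP ->; rewrite scale0r.
  have DT : (A o3 - A o4)^T = - (A o3 - A o4).
    by rewrite linearB /= (A3T Htr34) A4T opprB.
  have ET : (E q')^T = - E q'.
    by apply: (scalerI d0); rewrite -trmxZ' -DD DT DD scalerN.
  have EE' : (E q')^T *m (E q')^T = (E q')^T by rewrite -trmx_mul EE.
  rewrite ET mulNmx mulmxN opprK EE in EE'.
  have : (2%:R : algC) *: E q' = 0 by rewrite scaler_nat mulr2n {1}EE' addNr.
  by move/eqP; rewrite scaler_eq0 (negbTE (nzE q')) orbF pnatr_eq0.
have realk : forall k, k != p -> k != q -> (P o3 k)^* = P o3 k.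
  move=> k kp kq; move: (allL k) kp kq; rewrite !inE => /orP [/eqP ->|/orP [/eqP ->|/orP [/eqP ->|/orP [/eqP ->|/eqP ->]]]];
  rewrite ?eqxx // => _ _; exact: symR.
have Rp : (P o3 p)^* != P o3 p.
  apply/eqP => hp; apply: (nonreal q) => k kq.
  by case: (eqVneq k p) => [->//|kp]; exact: realk.
have Rq : (P o3 q)^* != P o3 q.
  apply/eqP => hq; apply: (nonreal p) => k kp.
  by case: (eqVneq k q) => [->//|kq]; exact: realk.
have P3pq : P o3 p != P o3 q.
  apply/eqP => e.
  have : E p = E q.
    apply: (prim_eq_of_eig HB1 HBM HBC HBct (primE p) (primE q)) => r x H.
    rewrite -(Pu _ _ _ H).
    suff -> : P r p = P r q by rewrite HP.
    case: (leqP r 2) => hr; first by rewrite !PAlow // Hp Hq.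
    have : (r == o3) || (r == o4).
      by rewrite -!val_eqE /= !inordK //; have := ltn_ord r; move: hr; clear; lia.
    by case/orP => /eqP ->; rewrite ?P4c e.
  by move/injE => pq; rewrite pq eqxx in qp.
pose lam k := P i k + P o3 k.
pose M := adjmx (fun x y => (c x y == i) || (nat_of_ord (c x y) == 3)%N).
have ME : M = A i + A o3.
  apply/matrixP=> x y; rewrite !mxE.
  have -> : (c x y == o3) = (nat_of_ord (c x y) == 3)%N by rewrite -val_eqE /= inordK.
  case ci : (c x y == i); case c3 : (nat_of_ord (c x y) == 3)%N; rewrite //= ?addr0 ?add0r //.
  by move/eqP: ci c3 => ->; move: hi2; clear; lia.
have MEk : forall k, M *m E k = lam k *: E k by move=> k; rewrite ME mulmxDl !HP scalerDl.
have cME : forall k, M *m E k = E k *m M.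
  by move=> k; rewrite ME; apply: HBC; [apply: BMD; exact: BMrel | exact: BE].
have spec := eig_spec SumE nzE MEk cME.
exists [:: lam ord0; lam u; lam w; lam p; lam q]; split => //; last first.
  move=> e; rewrite -/M spec; split => [[k ->]|].
    move: (allL k); rewrite !inE => /orP [/eqP ->|/orP [/eqP ->|/orP [/eqP ->|/orP [/eqP ->|/eqP ->]]]];
    by rewrite eqxx ?orbT.
  rewrite !inE => /orP [/eqP ->|/orP [/eqP ->|/orP [/eqP ->|/orP [/eqP ->|/eqP ->]]]]; by eexists.
have th_i0 : th i4 ord0 = (kk i4)%:R by rewrite /th i40 eqxx.
have th_ii : th i4 i4 = b i4 by rewrite /th i40 eqxx.
have th_ij : th i4 j4 = a i4 by rewrite /th i40 j40 j4i4.
have th_i3 : th i4 t3 = a i4 by rewrite /th i40 t30 t3i4.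
have th_30 : th t3 ord0 = (kk t3)%:R by rewrite /th t30 eqxx.
have th_3i : th t3 i4 = a t3 by rewrite /th t30 i40 i4t3.
have th_3j : th t3 j4 = a t3 by rewrite /th t30 j40 j4t3.
have th_33 : th t3 t3 = b t3 by rewrite /th t30 eqxx.
have l0 : lam ord0 = (kk i4)%:R + P o3 ord0 by rewrite /lam PAi tau00 th_i0.
have lu : lam u = b i4 + P o3 u by rewrite /lam PAi Hu th_ii.
have lw : lam w = a i4 + P o3 w by rewrite /lam PAi Hw th_ij.
have lp : lam p = a i4 + P o3 p by rewrite /lam PAi Hp th_i3.
have lq : lam q = a i4 + P o3 q by rewrite /lam PAi Hq th_i3.
have h0 : P o3 ord0 + P o3 ord0 = (kk t3)%:R.
  by rewrite -{2}(P34sym _ sym0) Psum tau00 th_30.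
have hu : P o3 u + P o3 u = a t3 by rewrite -{2}(P34sym _ symu) Psum Hu th_3i.
have hw : P o3 w + P o3 w = a t3 by rewrite -{2}(P34sym _ symw) Psum Hw th_3j.
have aR : (a i4)^* = a i4 by rewrite -th_ij thR.
have bR : (b i4)^* = b i4 by rewrite -th_ii thR.
have nr : forall x k, x^* = x -> (P o3 k)^* != P o3 k -> x != a i4 + P o3 k.
  move=> x k hx Rk; apply/eqP => e; case/eqP: Rk.
  have -> : P o3 k = x - a i4 by rewrite e addrC addKr.
  by rewrite rmorphB /= hx aR.
have R0 : ((kk i4)%:R + P o3 ord0)^* = (kk i4)%:R + P o3 ord0.
  by rewrite rmorphD /= conjC_nat symR.
have Ru : (b i4 + P o3 u)^* = b i4 + P o3 u by rewrite rmorphD /= bR symR.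
have Rw : (a i4 + P o3 w)^* = a i4 + P o3 w by rewrite rmorphD /= aR symR.
have d0p : lam ord0 != lam p by rewrite l0 lp nr.
have d0q : lam ord0 != lam q by rewrite l0 lq nr.
have dup : lam u != lam p by rewrite lu lp nr.
have duq : lam u != lam q by rewrite lu lq nr.
have dwp : lam w != lam p by rewrite lw lp nr.
have dwq : lam w != lam q by rewrite lw lq nr.
have dpq : lam p != lam q.
  by rewrite lp lq; apply: contra P3pq => /eqP /addrI ->.
have two0 : (2%:R : algC) != 0 by rewrite pnatr_eq0.
have duw : lam u != lam w.
  have euw : P o3 u = P o3 w.
    have e2 : (P o3 u - P o3 w) * 2%:R = 0 by rewrite mulrBl !mulr_natr !mulr2n hu hw subrr.
    by move/eqP: e2; rewrite mulf_eq0 (negbTE two0) orbF subr_eq0 => /eqP.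
  rewrite lu lw euw; apply/eqP => /addIr e.
  by have [_ _ _ _ /eqP] := Hnum i4 (negbT i40); rewrite e.
have kpos : (0 < kk i4)%N.
  have [x [y hxy]] := Hne i.
  have [hk _ _ _ _] := Hnum i4 (negbT i40).
  rewrite -(hk x) card_gt0; apply/set0Pn; exists y; rewrite inE symzE hxy.
  have -> : (nat_of_ord i == 4)%N = false by apply/eqP; move: hi2; clear; lia.
  by [].
have mpos : forall j, 0 < \tr (Et j).
  by move=> j; rewrite -{1}(EtEt j) -{2}(hermEt j); apply: tr_ct_gt0.
have thle : forall r j, r != ord0 -> th r j <= (kk r)%:R.
  move=> r j r0; have [hk _ _ _ _] := Hnum r r0.
  have hb := @bound _ (fun x y => symz c x y == r) (kk r) (Et j) (th r j)
    (fun x y => congr1 (fun t => t == r) (symz_sym Hsym Htr34 x y)) hk (nzEt j) (HAt r j).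
  apply: le_trans hb; apply: real_ler_norm; rewrite CrealE thR //.
have sxx : forall x, symz c x x = ord0 by move=> x; apply/eqP; rewrite Hdiag_s.
have AtSpec : forall r, At r = \sum_j th r j *: Et j.
  by move=> r; rewrite -[At r]mulmx1 -SumEt mulmx_sumr; apply: eq_bigr => j _; rewrite HAt.
have tr1 : \tr (At i4) = 0.
  by rewrite /mxtrace big1 // => x _; rewrite /At rel_mxE sxx o0i4.
have tr2 : \tr (At i4 *m At t3) = 0.
  rewrite /mxtrace big1 // => x _; rewrite mxE big1 // => z _.
  rewrite /At !rel_mxE (symz_sym Hsym Htr34 z x).
  by case h : (symz c x z == i4); rewrite ?mul0r // (eqP h) i4t3 mulr0.
have uL4 : uniq [:: ord0; i4; j4; t3] by rewrite /= !inE o0i4 o0j4 o0t3 i4j4 i4t3 j4t3.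
have Sum4 : forall F : 'I_4 -> algC, \sum_j F j = F ord0 + F i4 + F j4 + F t3.
  by move=> F; rewrite (sum_uniq F uL4) ?card_ord // !big_cons big_nil addr0 !addrA.
have T1 : (kk i4)%:R * \tr (Et ord0) + b i4 * \tr (Et i4) + a i4 * \tr (Et j4)
          + a i4 * \tr (Et t3) = 0.
  by rewrite -tr1 [At i4]AtSpec tr_sum Sum4 !mxtraceZ th_i0 th_ii th_ij th_i3.
have A13 : At i4 *m At t3 = \sum_j (th i4 j * th t3 j) *: Et j.
  rewrite [At t3]AtSpec mulmx_sumr; apply: eq_bigr => j _.
  by rewrite -scalemxAr HAt scalerA mulrC.
have T2 : (kk i4)%:R * (kk t3)%:R * \tr (Et ord0) + b i4 * a t3 * \tr (Et i4)
          + a i4 * a t3 * \tr (Et j4) + a i4 * b t3 * \tr (Et t3) = 0.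
  by rewrite -tr2 A13 tr_sum Sum4 !mxtraceZ th_i0 th_ii th_ij th_i3 th_30 th_3i th_3j th_33.
have bad : a t3 = (kk t3)%:R -> (b i4 = (kk i4)%:R \/ a i4 = (kk i4)%:R) -> False.
  move=> a3 hb.
  have key : a i4 * (b t3 - (kk t3)%:R) * \tr (Et t3) = 0.
    have -> : a i4 * (b t3 - (kk t3)%:R) * \tr (Et t3) =
      ((kk i4)%:R * (kk t3)%:R * \tr (Et ord0) + b i4 * a t3 * \tr (Et i4)
          + a i4 * a t3 * \tr (Et j4) + a i4 * b t3 * \tr (Et t3))
      - (kk t3)%:R * ((kk i4)%:R * \tr (Et ord0) + b i4 * \tr (Et i4) + a i4 * \tr (Et j4)
          + a i4 * \tr (Et t3)) by rewrite a3; ring.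
    by rewrite T1 T2 mulr0 subr0.
  have b3 : b t3 - (kk t3)%:R != 0.
    by rewrite subr_eq0 -a3; have [_ _ _ _ hab] := Hnum t3 (negbT t30); rewrite eq_sym.
  have m3 : \tr (Et t3) != 0 by rewrite gt_eqF // mpos.
  have a0 : a i4 = 0 by move/eqP: key; rewrite !mulf_eq0 (negbTE b3) (negbTE m3) !orbF => /eqP.
  have kne : (kk i4)%:R != 0 :> algC by rewrite pnatr_eq0 -lt0n.
  case: hb => [hb|ha]; last by move: kne; rewrite -ha a0 eqxx.
  move: T1; rewrite hb a0 !mul0r !addr0 -mulrDr => /eqP; rewrite mulf_eq0 (negbTE kne) /=.
  by rewrite gt_eqF // addr_gt0 // mpos.
have a3le : a t3 <= (kk t3)%:R by rewrite -th_3i; apply: thle; rewrite t30.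
have eqcase : forall (x : algC) k, x <= (kk i4)%:R -> P o3 k + P o3 k = a t3 ->
    (kk i4)%:R + P o3 ord0 = x + P o3 k -> x = (kk i4)%:R /\ a t3 = (kk t3)%:R.
  move=> x k hx hk e.
  have e2 : ((kk i4)%:R - x) * 2%:R + ((kk t3)%:R - a t3) = 0.
    rewrite -h0 -hk.
    have -> : ((kk i4)%:R - x) * 2%:R + (P o3 ord0 + P o3 ord0 - (P o3 k + P o3 k))
       = (((kk i4)%:R + P o3 ord0) - (x + P o3 k)) * 2%:R by ring.
    by rewrite e subrr mul0r.
  have g1 : 0 <= ((kk i4)%:R - x) * 2%:R by rewrite mulr_ge0 ?ler0n // subr_ge0.
  have g2 : 0 <= (kk t3)%:R - a t3 by rewrite subr_ge0.
  move/eqP: e2; rewrite paddr_eq0 // mulf_eq0 (negbTE two0) orbF !subr_eq0.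
  by case/andP => /eqP -> /eqP ->.
have d0u : lam ord0 != lam u.
  apply/eqP; rewrite l0 lu => e.
  have [h1 h2] := eqcase _ _ (eq_ind _ (fun z => z <= _) (thle i4 i4 (negbT i40)) _ th_ii) hu e.
  by apply: (bad h2); left.
have d0w : lam ord0 != lam w.
  apply/eqP; rewrite l0 lw => e.
  have [h1 h2] := eqcase _ _ (eq_ind _ (fun z => z <= _) (thle i4 j4 (negbT i40)) _ th_ij) hw e.
  by apply: (bad h2); right.
rewrite /= !inE !negb_or d0u d0w d0p d0q duw dup duq dwp dwq dpq.
done.
Qed.
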